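(* Let $G$ be a connected graph of order $n$ with chromatic number $\chi(G)=2$. If $n$ is even, then $ABC(G)\leq \frac{n}{2}\sqrt{n-2}$, with equality if and only if $G\cong T_{n,2}$. If $n$ is odd, then $ABC(G)\leq \frac{1}{2}\sqrt{(n-2)(n^2-1)}$, with equality if and only if $G\cong T_{n,2}$.
   Context: For a simple graph $G$, $ABC(G)=\sum_{uv\in E(G)}\sqrt{\frac{d(u)+d(v)-2}{d(u)d(v)}}$, where $d(u)$ is the degree of $u$. The chromatic number is the least number of colors in a proper vertex coloring. $T_{n,t}$ denotes the complete $t$-partite graph on $n$ vertices whose part sizes $n_1,\dots,n_t$ satisfy $|n_i-n_j|\leq 1$ for all $i,j$; so $T_{n,2}=K_{\lfloor n/2\rfloor,\lceil n/2\rceil}$. *)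

(* Defs.v *)
From HB Require Import structures.
From mathcomp Require Import all_boot all_order all_algebra.
Set Implicit Arguments. Unset Strict Implicit. Unset Printing Implicit Defensive.
Import Order.TTheory GRing.Theory Num.Theory.
Local Open Scope ring_scope.

Section Graphs.
Variable T : finType.
Variable e : rel T.

Definition simple_graph : Prop := symmetric e /\ irreflexive e.

Definition connected_graph : Prop := forall x y : T, connect e x y.

Definition deg (x : T) : nat := #|[set y | e x y]|.

Definition colorable (k : nat) : Prop :=
  exists f : T -> 'I_k, forall x y, e x y -> f x != f y.

Definition chromatic_number_is (k : nat) : Prop :=
  colorable k /\ forall j, (j < k)%N -> ~ colorable j.

(* ABC index: sum over edges uv of sqrt((d u + d v - 2)/(d u d v));
   each unordered edge {u,v} appears twice as ordered pair, hence the 1/2. *)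
Definition ABC (R : rcfType) : R :=
  2^-1 * \sum_(x : T) \sum_(y : T | e x y)
     Num.sqrt (((deg x)%:R + (deg y)%:R - 2) / ((deg x)%:R * (deg y)%:R)).

End Graphs.

(* T_{n,2} = K_{floor(n/2), ceil(n/2)} on vertex set 'I_n:
   parts {i | i < n/2} (size floor(n/2)) and {i | i >= n/2} (size ceil(n/2)) *)
Definition turan2 (n : nat) : rel 'I_n :=
  fun i j => (i < n./2)%N != (j < n./2)%N.

Definition graph_iso (T T' : finType) (e : rel T) (e' : rel T') : Prop :=
  exists f : T -> T', bijective f /\ forall x y, e' (f x) (f y) = e x y.
Arguments turan2 n : clear implicits.

(* Main.v *)
Require Import Defs.
From HB Require Import structures.
From mathcomp Require Import all_boot all_order all_algebra.
From mathcomp Require Import zify ring lra.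
Import Order.TTheory GRing.Theory Num.Theory.
Local Open Scope ring_scope.

Definition Fv (R : rcfType) (T : finType) (e : rel T) (x y : T) : R :=
  Num.sqrt (((deg e x)%:R + (deg e y)%:R - 2) / ((deg e x)%:R * (deg e y)%:R)).

Arguments Fv R {T} e x y.

Lemma Fv_sym (R : rcfType) (T : finType) (e : rel T) x y : Fv R e x y = Fv R e y x.
Proof. by rewrite /Fv (addrC (deg e x)%:R) (mulrC (deg e x)%:R). Qed.

Lemma sum_pair (R : rcfType) (T : finType) (P : pred T) (Q : T -> pred T) (F : T -> T -> R) :
  \sum_(x | P x) \sum_(y | Q x y) F x y = \sum_x \sum_(y | P x && Q x y) F x y.
Proof.
rewrite big_mkcond; apply: eq_bigr => x _; case: (P x) => //=.
by rewrite big_pred0_eq.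
Qed.

Lemma sum_swap (R : rcfType) (T : finType) (Q : T -> pred T) (F : T -> T -> R) :
  \sum_x \sum_(y | Q x y) F x y = \sum_y \sum_(x | Q x y) F x y.
Proof. by rewrite (exchange_big_dep predT) //. Qed.

Lemma sum_deg (R : rcfType) (T : finType) (e : rel T) x (k : R) :
  \sum_(y | e x y) k = (deg e x)%:R * k.
Proof.
rewrite /deg -sum1dep_card natr_sum big_distrl /=.
by apply: eq_bigr => *; rewrite mul1r.
Qed.

Lemma sum_cardc (R : rcfType) (T : finType) (c : pred T) (k : R) :
  \sum_(x | c x) k = #|c|%:R * k.
Proof.
rewrite -sum1_card natr_sum big_distrl /=.
by apply: eq_bigr => *; rewrite mul1r.
Qed.

Lemma ABC_half (R : rcfType) (T : finType) (e : rel T) (c : pred T) :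
  symmetric e -> (forall x y, e x y -> c x != c y) ->
  ABC e R = \sum_(x | c x) \sum_(y | e x y) Fv R e x y.
Proof.
move=> sym pr; rewrite /ABC (bigID c) /=.
have -> : \sum_(i | ~~ c i) \sum_(y | e i y)
    Num.sqrt (((deg e i)%:R + (deg e y)%:R - 2) / ((deg e i)%:R * (deg e y)%:R))
   = \sum_(x | c x) \sum_(y | e x y) Fv R e x y.
  rewrite [LHS]sum_pair [LHS]sum_swap [RHS]sum_pair; apply: eq_bigr => y _.
  apply: eq_big => [x|x].
    rewrite (sym x y); case E: (e y x) => /=; rewrite ?andbF ?andbT //.
    by have := pr _ _ E; case: (c y); case: (c x).
  by move=> _; rewrite Fv_sym.
have h2 : forall S : R, 2^-1 * (S + S) = S by move=> S; field.
exact: h2.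
Qed.

Lemma card_ord_lt n k : (k <= n)%N -> #|[pred i : 'I_n | (i < k)%N]| = k.
Proof.
move=> kn; rewrite -sum1_card.
rewrite (eq_bigl (fun i : 'I_n => true && (i < k)%N)) //.
by rewrite (big_ord_narrow_cond kn) sum1_card card_ord.
Qed.

Lemma deg_le (T : finType) (e : rel T) (c : pred T) x :
  (forall x y, e x y -> c x != c y) ->
  (deg e x <= (if c x then #|[predC c]| else #|c|))%N.
Proof.
move=> pr; rewrite /deg.
case cx: (c x); apply: subset_leq_card; apply/subsetP => y;
  rewrite inE unfold_in /= => exy; have := pr _ _ exy; rewrite cx; rewrite ?[y \notin c]/(~~ c y); by case: (c y).
Qed.

Lemma deg_gt0_of (T : finType) (e : rel T) x z :
  connect e x z -> x != z -> (0 < deg e x)%N.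
Proof.
case/connectP => [[|w p]] /=; first by move=> _ ->; rewrite eqxx.
case/andP => exw _ _ _; apply/card_gt0P; exists w; by rewrite inE.
Qed.

Lemma S1 (R : rcfType) (T : finType) (e : rel T) (c : pred T) :
  (forall x, (0 < deg e x)%N) ->
  \sum_(x | c x) \sum_(y | e x y) ((deg e x)%:R : R)^-1 = #|c|%:R.
Proof.
move=> hpos; rewrite (eq_bigr (fun _ => (1:R))); first by rewrite sum_cardc mulr1.
by move=> x _; rewrite sum_deg mulfV // pnatr_eq0 -lt0n hpos.
Qed.

Lemma S2 (R : rcfType) (T : finType) (e : rel T) (c : pred T) :
  symmetric e -> (forall x y, e x y -> c x != c y) ->
  (forall x, (0 < deg e x)%N) ->
  \sum_(x | c x) \sum_(y | e x y) ((deg e y)%:R : R)^-1 = #|[predC c]|%:R.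
Proof.
move=> sym pr hpos; rewrite sum_pair sum_swap (bigID c) /=.
rewrite big1 ?add0r; last first.
  move=> y cy; apply: big1 => x /andP [cx exy].
  by have := pr _ _ exy; rewrite cx cy.
rewrite (eq_bigr (fun _ => (1:R))).
  by have := @sum_cardc R T [predC c] 1; rewrite mulr1.
move=> y ncy; rewrite (eq_bigl (fun x => e y x)).
  by rewrite sum_deg mulfV // pnatr_eq0 -lt0n hpos.
move=> x; rewrite sym; case exy: (e y x) => /=; last by rewrite andbF.
rewrite andbT; move: exy; rewrite sym => exy.
by have := pr _ _ exy; move: ncy; case: (c y); case: (c x).
Qed.

Lemma S3 (R : rcfType) (T : finType) (e : rel T) (c : pred T) :
  \sum_(x | c x) \sum_(y | e x y) (1 : R) = (\sum_(x | c x) deg e x)%:R.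
Proof. by rewrite natr_sum; apply: eq_bigr => x _; rewrite sum_deg mulr1. Qed.

Lemma m_leqif (T : finType) (e : rel T) (c : pred T) :
  (forall x y, e x y -> c x != c y) ->
  (\sum_(x | c x) deg e x <= #|c| * #|[predC c]| ?=
     iff [forall (x | c x), deg e x == #|[predC c]|])%N.
Proof.
move=> pr; rewrite -sum_nat_const.
apply: leqif_sum => x cx; apply: leqif_eq.
by have := @deg_le T e c x pr; rewrite cx.
Qed.

Lemma complete_of (T : finType) (e : rel T) (c : pred T) :
  symmetric e -> (forall x y, e x y -> c x != c y) ->
  (\sum_(x | c x) deg e x)%N = (#|c| * #|[predC c]|)%N ->
  forall x y, e x y = (c x != c y).
Proof.
move=> sym pr hm.
have hall : forall x, c x -> forall y, e x y = ~~ c y.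
  move=> x cx y.
  have := @m_leqif T e c pr; rewrite hm => -[_]; rewrite eqxx => /esym/forallP/(_ x).
  rewrite cx /= => /eqP hd.
  have := @deg_le T e c x pr; rewrite cx => _.
  have hs : [set y | e x y] \subset [predC c].
    apply/subsetP => z; rewrite inE => exz; have := pr _ _ exz; rewrite cx.
    by rewrite inE ?[z \notin c]/(~~ c z); case: (c z).
  have /subset_cardP := hd; move=> /(_ hs) /(_ y).
  by rewrite inE unfold_in.
move=> x y; case cx: (c x); first by rewrite hall.
case cy: (c y); first by rewrite sym hall // cx.
apply/negbTE/negP => exy; have := pr _ _ exy; by rewrite cx cy.
Qed.

Lemma sum2_lin (R : rcfType) (T : finType) (P : pred T) (Q : T -> pred T)
  (F G : T -> T -> R) (k1 k2 k3 : R) :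
  \sum_(x | P x) \sum_(y | Q x y) (k1 * F x y + k2 * G x y + k3) =
  k1 * (\sum_(x | P x) \sum_(y | Q x y) F x y) +
  k2 * (\sum_(x | P x) \sum_(y | Q x y) G x y) +
  k3 * (\sum_(x | P x) \sum_(y | Q x y) (1:R)).
Proof.
rewrite !mulr_sumr -!big_split; apply: eq_bigr => x _.
rewrite !mulr_sumr -!big_split; apply: eq_bigr => y _.
by rewrite mulr1.
Qed.

Lemma pointwise (R : rcfType) (u v B al be : R) :
  1 <= u -> u <= B -> 1 <= v -> 0 < al -> 4 * al * be = 1 ->
  Num.sqrt ((u + v - 2) / (u * v)) <= al * u^-1 + al * (1 - 2 / B) * v^-1 + be.
Proof.
move=> u1 uB v1 al0 hab.
have u0 : u != 0 by apply/negP => /eqP u0; move: u1; rewrite u0; lra.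
have v0 : v != 0 by apply/negP => /eqP v0; move: v1; rewrite v0; lra.
have B0 : B != 0 by apply/negP => /eqP B0; move: u1 uB; rewrite B0; lra.
have h0 : 0 <= (u + v - 2) / (u * v).
  apply: divr_ge0; first lra.
  apply: mulr_ge0; lra.
set h := (u + v - 2) / (u * v).
set t := Num.sqrt h.
have ht : t ^+ 2 = h by rewrite sqr_sqrtr.
have t1 : t <= al * h + be.
  rewrite -ht; have := sqr_ge0 (2 * al * t - 1); nra.
have hg : h <= u^-1 + (1 - 2 / B) * v^-1.
  rewrite -subr_ge0.
  have -> : u^-1 + (1 - 2 / B) * v^-1 - h = 2 * (B - u) / (u * v * B).
    by rewrite /h; field; rewrite ?u0 ?v0 ?B0.
  apply: divr_ge0; first lra.
  apply: mulr_ge0; [apply: mulr_ge0|]; lra.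
have : al * h <= al * (u^-1 + (1 - 2 / B) * v^-1) by rewrite ler_pM2l.
lra.
Qed.

Lemma core (R : rcfType) (T : finType) (e : rel T) (c : pred T) (K : R) (q : nat) :
  symmetric e -> (forall x y, e x y -> c x != c y) ->
  (forall x, (0 < deg e x)%N) -> (0 < #|[predC c]|)%N ->
  (2 < #|T|)%N -> 0 < K -> 4 * K ^+ 2 = q%:R * (#|T|%:R - 2) ->
  ABC e R <= K / 2 + 2 * K * (\sum_(x | c x) deg e x)%:R / q%:R.
Proof.
move=> sym pr hpos hb n2 K0 hK.
set n := #|T|; set m := (\sum_(x | c x) deg e x)%N.
have hn : n%:R = #|c|%:R + #|[predC c]|%:R :> R by rewrite -natrD cardC.
have n20 : (n%:R - 2 : R) != 0.
  have : (2 < n)%N by []. rewrite -(ltr_nat R) => ?. apply/negP => /eqP ?; lra.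
have n2p : (0 : R) < n%:R - 2.
  have : (2 < n)%N by []. rewrite -(ltr_nat R) => ?. lra.
have q0 : (q%:R : R) != 0.
  apply/negP => /eqP q0; move: hK; rewrite q0 mul0r => /eqP.
  rewrite mulf_eq0 sqrf_eq0 => /orP [|/eqP]; first by rewrite pnatr_eq0.
  lra.
have b0 : (#|[predC c]|%:R : R) != 0 by rewrite pnatr_eq0 -lt0n.
set al := K / (2 * (n%:R - 2)).
set be := 2 * K / q%:R.
have al0 : 0 < al by apply: divr_gt0 => //; lra.
have hab : 4 * al * be = 1.
  have -> : 4 * al * be = (4 * K ^+ 2) / ((n%:R - 2) * q%:R).
    by rewrite /al /be; field; rewrite n20 q0.
  by rewrite hK (mulrC (q%:R)) divff // mulf_neq0.
rewrite (@ABC_half R T e c sym pr).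
apply: le_trans (_ : \sum_(x | c x) \sum_(y | e x y)
   (al * ((deg e x)%:R)^-1 + al * (1 - 2 / #|[predC c]|%:R) * ((deg e y)%:R)^-1 + be) <= _).
  apply: ler_sum => x cx; apply: ler_sum => y exy; rewrite /Fv.
  have dx := @deg_le T e c x pr; rewrite cx in dx.
  apply: pointwise => //.
  - by rewrite (ler_nat R 1) hpos.
  - by rewrite ler_nat.
  - by rewrite (ler_nat R 1) hpos.
rewrite (@sum2_lin R T c e (fun x y => ((deg e x)%:R)^-1) (fun x y => ((deg e y)%:R)^-1)).
rewrite S1 // S2 // S3 -/m.
rewrite le_eqVlt; apply/orP; left; apply/eqP.
rewrite /al /be hn; field.
by rewrite b0 q0 -hn n20.
Qed.

Lemma main_bip (R : rcfType) (T : finType) (e : rel T) (c : pred T) (K : R) (q : nat) :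
  symmetric e -> (forall x y, e x y -> c x != c y) ->
  (forall x, (0 < deg e x)%N) -> (0 < #|c|)%N -> (0 < #|[predC c]|)%N ->
  0 <= K -> 4 * K ^+ 2 = q%:R * (#|T|%:R - 2) ->
  (4 * (#|c| * #|[predC c]|) <= q)%N -> (q <= #|T| * #|T|)%N ->
  ABC e R <= K /\
  (ABC e R = K -> (\sum_(x | c x) deg e x)%N = (#|c| * #|[predC c]|)%N /\
                  (4 * (#|c| * #|[predC c]|) = q)%N).
Proof.
move=> sym pr hpos ha hb K0 hK hq hqn.
set m := (\sum_(x | c x) deg e x)%N.
have hn : (#|c| + #|[predC c]|)%N = #|T| by rewrite cardC.
have hmab : (m <= #|c| * #|[predC c]|)%N by have [] := @m_leqif T e c pr.
have hma : (#|c| <= m)%N.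
  rewrite /m -sum1_card; apply: leq_sum => x _; exact: hpos.
case: (ltnP 2 #|T|) => n2; last first.
  have ha1 : #|c| = 1%N by lia.
  have hb1 : #|[predC c]| = 1%N by lia.
  split; last by move=> _; lia.
  rewrite (@ABC_half R T e c sym pr) big1 //.
  move=> x cx; apply: big1 => y exy; rewrite /Fv.
  have dx := @deg_le T e c x pr; rewrite cx hb1 in dx.
  have cy : c y = false by have := pr _ _ exy; rewrite cx; case: (c y).
  have dy := @deg_le T e c y pr; rewrite cy ha1 in dy.
  have dx1 : deg e x = 1%N by have := hpos x; lia.
  have dy1 : deg e y = 1%N by have := hpos y; lia.
  rewrite dx1 dy1 ler0_sqrtr //.
  by rewrite mulr1 invr1 mulr1 -natrD subrr.
have q0 : (0 < q)%N by lia.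
have Kp : 0 < K.
  rewrite lt_def K0 andbT; apply/negP => /eqP K00.
  move: hK; rewrite K00 expr0n /= mulr0 => /esym/eqP; rewrite mulf_eq0 pnatr_eq0.
  case/orP => [/eqP|]; first lia.
  rewrite subr_eq0 => /eqP h2; move: n2; rewrite -(ltr_nat R) h2; lra.
have hc := @core R T e c K q sym pr hpos hb n2 Kp hK.
rewrite -/m in hc.
have hqR : (q%:R : R) > 0 by rewrite ltr0n.
have h4m : 4 * (m%:R : R) <= q%:R.
  have : (4 * m <= q)%N by lia.
  by rewrite -(ler_nat R) natrM.
split.
  apply: (le_trans hc).
  have -> : K / 2 + 2 * K * m%:R / q%:R = K - K * (q%:R - 4 * m%:R) / (2 * q%:R).
    by field; rewrite gt_eqF.
  rewrite lerBlDr lerDl; apply: divr_ge0; last lra.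
  by apply: mulr_ge0; lra.
move=> hE.
have : K * (q%:R - 4 * m%:R) / (2 * q%:R) <= 0.
  have -> : K * (q%:R - 4 * m%:R) / (2 * q%:R) = K - (K / 2 + 2 * K * m%:R / q%:R).
    by field; rewrite gt_eqF.
  by rewrite subr_le0 -{1}hE.
rewrite pmulr_lle0 ?invr_gt0 ?mulr_gt0 // pmulr_rle0 // subr_le0.
rewrite -natrM (ler_nat R) => h.
lia.
Qed.

Lemma ABC_complete (R : rcfType) (T : finType) (e : rel T) (c : pred T) (K : R) (q : nat) :
  symmetric e -> (forall x y, e x y = (c x != c y)) ->
  (0 < #|c|)%N -> (0 < #|[predC c]|)%N ->
  0 <= K -> 4 * K ^+ 2 = q%:R * (#|T|%:R - 2) ->
  (4 * (#|c| * #|[predC c]|) = q)%N ->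
  ABC e R = K.
Proof.
move=> sym hc ha hb K0 hK hq.
have pr : forall x y, e x y -> c x != c y by move=> x y; rewrite hc.
have hn : (#|c| + #|[predC c]|)%N = #|T| by rewrite cardC.
have dA : forall x, c x -> deg e x = #|[predC c]|.
  move=> x cx; rewrite /deg; apply: eq_card => y.
  by rewrite inE hc cx ?[y \in [predC c]]/(~~ c y).
have dB : forall x, ~~ c x -> deg e x = #|c|.
  move=> x cx; rewrite /deg; apply: eq_card => y.
  by rewrite inE hc (negbTE cx) -[y \in c]/(c y); case: (c y).
set a := #|c|; set b := #|[predC c]|.
set phi : R := Num.sqrt ((b%:R + a%:R - 2) / (b%:R * a%:R)).
rewrite (@ABC_half R T e c sym pr).
rewrite (eq_bigr (fun x => \sum_(y | e x y) phi)); last first.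
  move=> x cx; apply: eq_bigr => y exy; rewrite /Fv dA //.
  have := pr _ _ exy; rewrite cx => ncy; rewrite dB //; by case: (c y) ncy.
rewrite (eq_bigr (fun x => b%:R * phi)); last first.
  by move=> x cx; rewrite sum_deg dA.
rewrite sum_cardc -/a.
have a1 : (1 : R) <= a%:R by rewrite (ler_nat R 1).
have b1 : (1 : R) <= b%:R by rewrite (ler_nat R 1).
have ph0 : 0 <= (b%:R + a%:R - 2) / (b%:R * a%:R) :> R.
  by apply: divr_ge0; [lra | apply: mulr_ge0; lra].
apply/eqP; rewrite -(@eqrXn2 _ 2) //; last first.
  by apply: mulr_ge0; [lra| apply: mulr_ge0; [lra| apply: sqrtr_ge0]].
apply/eqP.
have hK' : K ^+ 2 = a%:R * b%:R * (a%:R + b%:R - 2).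
  have : (4 * (a * b))%:R = q%:R :> R by rewrite hq.
  rewrite natrM natrM => h4.
  have : 4 * K ^+ 2 = 4 * (a%:R * b%:R * (a%:R + b%:R - 2)).
    by rewrite hK -hn natrD -h4; ring.
  move/(congr1 (fun z => z / 4)); rewrite !(mulrC 4) !mulfK //; by rewrite pnatr_eq0.
rewrite hK' !exprMn sqr_sqrtr //.
field.
by rewrite !pnatr_eq0 -!lt0n ha hb.
Qed.

Lemma iso_of (T : finType) (e : rel T) (c : pred T) :
  (forall x y, e x y = (c x != c y)) -> #|c| = (#|T|./2)%N ->
  graph_iso e (turan2 #|T|).
Proof.
move=> hc hk.
set s := enum c ++ enum [predC c].
have hs : size s = #|T| by rewrite size_cat -!cardE cardC.
have ins : forall x, x \in s.
  move=> x; rewrite mem_cat !mem_enum inE; by case: (x \in c).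
have lt : forall x, (index x s < #|T|)%N by move=> x; rewrite -hs index_mem.
pose f x := Ordinal (lt x).
have fc : forall x, ((f x : nat) < #|T|./2)%N = c x.
  move=> x; rewrite /= index_cat mem_enum -hk.
  case cx: (x \in c).
    by rewrite cardE index_mem mem_enum cx.
  rewrite -[c x]/(x \in c) cx; apply/negbTE; rewrite -leqNgt cardE; exact: leq_addr.
exists f; split.
  apply: inj_card_bij; last by rewrite card_ord.
  move=> x y /(congr1 val) /= h.
  by rewrite -(nth_index x (ins x)) h nth_index.
by move=> x y; rewrite /turan2 !fc hc.
Qed.

Lemma iso_to (T : finType) (e : rel T) :
  graph_iso e (turan2 #|T|) ->
  exists c : pred T, (forall x y, e x y = (c x != c y)) /\ #|c| = (#|T|./2)%N.
Proof.
case=> f [fb hf].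
exists (fun x => ((f x : nat) < #|T|./2)%N); split.
  by move=> x y; rewrite -hf.
have -> : #|(fun x => ((f x : nat) < #|T|./2)%N)| =
          #|f @^-1: [pred i : 'I_#|T| | (i < #|T|./2)%N]|.
  by apply: eq_card => x; rewrite !inE.
rewrite on_card_preimset; last exact: onW_bij.
apply: card_ord_lt; lia.
Qed.
Local Open Scope nat_scope.
Lemma f1 (a b : nat) : (4 * (a * b) <= (a + b) * (a + b) - odd (a + b))%N.
Proof.
case: (ltngtP a b) => h.
- have [k ->] : exists k, b = a + 1 + k by exists (b - a - 1); lia.
  have : odd (a + (a + 1 + k)) <= 1 by case: odd.
  nia.
- have [k ->] : exists k, a = b + 1 + k by exists (a - b - 1); lia.
  have : odd (b + 1 + k + b) <= 1 by case: odd.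
  nia.
- subst; have : odd (b + b) = false by rewrite addnn odd_double.
  nia.
Qed.
Lemma f2 (a b : nat) : (4 * (a * b) = (a + b) * (a + b) - odd (a + b))%N ->
  (a = (a + b)./2)%N \/ (b = (a+b)./2)%N.
Proof.
move=> H.
case: (ltngtP a b) => h.
- have [k E] : exists k, b = a + 1 + k by exists (b - a - 1); lia.
  subst b. have : odd (a + (a + 1 + k)) <= 1 by case: odd.
  move=> ho.
  have k0 : k = 0 by nia.
  subst k. left; lia.
- have [k E] : exists k, a = b + 1 + k by exists (a - b - 1); lia.
  subst a. have : odd (b + 1 + k + b) <= 1 by case: odd.
  move=> ho.
  have k0 : k = 0 by nia.
  subst k. right; lia.
- subst; left; lia.
Qed.

Local Open Scope ring_scope.

Lemma finish (R : rcfType) (T : finType) (e : rel T) (c : pred T) (K : R) :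
  symmetric e -> (forall x y, e x y -> c x != c y) ->
  (forall x, (0 < deg e x)%N) -> (0 < #|c|)%N -> (0 < #|[predC c]|)%N ->
  0 <= K ->
  4 * K ^+ 2 = (#|T| * #|T| - odd #|T|)%N%:R * (#|T|%:R - 2) ->
  ABC e R <= K /\ (ABC e R = K <-> graph_iso e (turan2 #|T|)).
Proof.
move=> sym pr hpos ha hb K0 hK.
have hn : (#|c| + #|[predC c]|)%N = #|T| by rewrite cardC.
have hq : (4 * (#|c| * #|[predC c]|) <= #|T| * #|T| - odd #|T|)%N.
  by rewrite -hn; apply: f1.
have [hle heq] := @main_bip R T e c K _ sym pr hpos ha hb K0 hK hq (leq_subr _ _).
split => //; split.
  move=> hE; have [hm h4] := heq hE.
  have hcomp := @complete_of T e c sym pr hm.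
  rewrite -hn in h4; case: (f2 _ _ h4); rewrite hn => hh.
    by apply: iso_of.
  apply: (@iso_of T e [predC c]) => // x y.
  by rewrite hcomp /in_mem /=; case: (c x); case: (c y).
case/iso_to => c' [hc' hk].
have hn' : (#|c'| + #|[predC c']|)%N = #|T| by rewrite cardC.
have n2 : (2 <= #|T|)%N by lia.
apply: (@ABC_complete R T e c' K (#|T| * #|T| - odd #|T|)) => //.
- by rewrite hk; lia.
- lia.
- have hb' : #|[predC c']| = (#|T| - #|T|./2)%N by lia.
  rewrite hk hb'.
  move: (#|T|) => N.
  have [k [->|->]] : exists k, N = (k + k)%N \/ N = (k + k + 1)%N.
    by exists (N./2); lia.
  + have -> : ((k + k)./2 = k)%N by lia.
    have -> : odd (k + k) = false by rewrite addnn odd_double.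
    lia.
  + have -> : ((k + k + 1)./2 = k)%N by lia.
    have -> : odd (k + k + 1) = true by rewrite addn1 /= addnn odd_double.
    nia.
Qed.

Theorem proposition5p2 (R : rcfType) (T : finType) (e : rel T) :
  simple_graph e -> connected_graph e -> chromatic_number_is e 2 ->
  let n := #|T| in
  (~~ odd n ->
     ABC e R <= (n%:R / 2) * Num.sqrt (n%:R - 2) /\
     (ABC e R = (n%:R / 2) * Num.sqrt (n%:R - 2) <-> graph_iso e (turan2 n))) /\
  (odd n ->
     ABC e R <= 2^-1 * Num.sqrt ((n%:R - 2) * (n%:R ^+ 2 - 1)) /\
     (ABC e R = 2^-1 * Num.sqrt ((n%:R - 2) * (n%:R ^+ 2 - 1))
        <-> graph_iso e (turan2 n))).
Proof.
move=> [sym irr] conn [[f fpr] nc1] n.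
pose c : pred T := fun x => (f x : nat) == 0%N.
have pr : forall x y, e x y -> c x != c y.
  move=> x y exy; move: (fpr _ _ exy); rewrite /c.
  case: (f x) => [[|[|i]] hi] //; case: (f y) => [[|[|j]] hj] //.
have [x0 [y0 e0]] : exists x y, e x y.
  case: (boolP [exists x, [exists y, e x y]]).
    by case/existsP => x /existsP [y exy]; exists x, y.
  move=> hne; exfalso; apply: (nc1 1%N) => //.
  exists (fun _ => ord0) => x y exy; case/negP: hne.
  by apply/existsP; exists x; apply/existsP; exists y.
have xy0 : x0 != y0 by apply/negP => /eqP E; move: e0; rewrite E irr.
have hpos : forall x, (0 < deg e x)%N.
  move=> x; case: (eqVneq x x0) => [->|hx].
    exact: (@deg_gt0_of T e _ _ (conn x0 y0) xy0).
  exact: (@deg_gt0_of T e _ _ (conn x x0) hx).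
have hc0 := pr _ _ e0.
have ha : (0 < #|c|)%N.
  apply/card_gt0P; case cx0: (c x0); first by exists x0.
  by exists y0; move: hc0; rewrite cx0 -[y0 \in c]/(c y0); case: (c y0).
have hb : (0 < #|[predC c]|)%N.
  apply/card_gt0P; case cx0: (c x0); last by exists x0; rewrite inE /in_mem /= cx0.
  by exists y0; move: hc0; rewrite cx0 inE /in_mem /=; case: (c y0).
have hn : (#|c| + #|[predC c]|)%N = n by rewrite cardC.
have n2 : (2 <= n)%N by lia.
have n2R : (0 : R) <= n%:R - 2.
  by rewrite subr_ge0 (ler_nat R 2).
split => hodd.
  apply: (@finish R T e c _ sym pr hpos ha hb).
    apply: mulr_ge0; last exact: sqrtr_ge0.
    by apply: divr_ge0; rewrite ?ler0n.
  rewrite (negbTE hodd) subn0 natrM exprMn sqr_sqrtr //.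
  by field.
apply: (@finish R T e c _ sym pr hpos ha hb).
  by apply: mulr_ge0; [rewrite invr_ge0 ler0n | exact: sqrtr_ge0].
have n1 : (1 <= n * n)%N by lia.
rewrite hodd natrB // natrM exprMn sqr_sqrtr; last first.
  apply: mulr_ge0 => //; rewrite subr_ge0 expr2 -natrM (ler_nat R 1) //.
by rewrite /n /=; field.
Qed.
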